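(* Let $(Y_t,X_t)_{t\ge1}$ be a hidden Markov model with finite state space $S$, $T\ge1$, and let $k$ satisfy $T\ge k>1$. Then for all paths $s^T\in S^T$, $$\bar R_k(s^T)=\bar R_\infty(s^T)+\bar R_{k-1}(s^T),$$ and for every $x^T\in\mathcal X^T$ (with $p(x^T)>0$) and all $s^T\in S^T$, $$\bar R_k(s^T|x^T)=\bar R_\infty(s^T|x^T)+\bar R_{k-1}(s^T|x^T).$$
   Context: Hidden Markov model: $Y$ is a Markov chain on finite $S$; given $Y$, the $X_t$ are conditionally independent and $X_t$ has density $f_s$ when $Y_t=s$. Prior path law $p(s^T)=\mathbf P(Y^T=s^T)$, posterior path law $p(s^T|x^T)=\mathbf P(Y^T=s^T|X^T=x^T)$; for $1\le a\le b\le T$, $p(s_a^b)=\mathbf P(Y_a^b=s_a^b)$ and $p(s_a^b|x^T)=\mathbf P(Y_a^b=s_a^b|X^T=x^T)$, where $s_a^b=(s_a,\dots,s_b)$. For a positive integer $k$: $\bar R_k(s^T)=-\frac1T\ln\prod_{j=1-k}^{T-1}p(s_{(j+1)\vee1}^{(j+k)\wedge T})$ and $\bar R_k(s^T|x^T)=-\frac1T\ln\prod_{j=1-k}^{T-1}p(s_{(j+1)\vee1}^{(j+k)\wedge T}|x^T)$; also $\bar R_\infty(s^T)=-\frac1T\ln p(s^T)$ and $\bar R_\infty(s^T|x^T)=-\frac1T\ln p(s^T|x^T)$. Here $\vee=\max$, $\wedge=\min$, $\ln0=-\infty$. *)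

(* Defs.v *)
From HB Require Import structures.
From mathcomp Require Import all_boot all_order all_algebra.
From mathcomp Require Import all_classical all_reals all_analysis.
Set Implicit Arguments. Unset Strict Implicit. Unset Printing Implicit Defensive.
Import Order.TTheory GRing.Theory Num.Theory.
Local Open Scope ring_scope.

Section HMMdefs.
Variables (R : realType) (S : finType).

(* a path s^T = (s_1,...,s_T); s_t (1-based) is s (t-1) *)
Notation path T := {ffun 'I_T -> S}.

Definition prior (pi : S -> R) (P : S -> S -> R) (T : nat) (s : path T) : R :=
  \prod_(t < T) (if val t == 0%N then pi (s t) else P (s (ord_pred t)) (s t)).

Definition joint (X : Type) (pi : S -> R) (P : S -> S -> R) (f : S -> X -> R)
  (T : nat) (x : 'I_T -> X) (s : path T) : R :=
  prior pi P s * \prod_(t < T) f (s t) (x t).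

Definition px (X : Type) (pi : S -> R) (P : S -> S -> R) (f : S -> X -> R)
  (T : nat) (x : 'I_T -> X) : R :=
  \sum_(u : path T) joint pi P f x u.

Definition post (X : Type) (pi : S -> R) (P : S -> S -> R) (f : S -> X -> R)
  (T : nat) (x : 'I_T -> X) (s : path T) : R :=
  joint pi P f x s / px pi P f x.

(* marginal of a path law q on the window [a,b] (1-based indices):
   q(s_a^b) = sum of q(u^T) over paths u^T with u_a^b = s_a^b *)
Definition marg (T : nat) (q : path T -> R) (a b : nat) (s : path T) : R :=
  \sum_(u : path T | [forall t : 'I_T, ((a <= t.+1 <= b)%N) ==> (u t == s t)]) q u.

Definition eln (r : R) : \bar R := if r == 0 then -oo%E else (ln r)%:E.

(* bar R_k(s^T) = -(1/T) ln prod_{j=1-k}^{T-1} q(s_{(j+1) v 1}^{(j+k) ^ T});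
   reindexed by i = j + k, i = 1, ..., T+k-1, the window is
   [max (i+1-k) 1, min i T]. *)
Definition Rbar (T : nat) (q : path T -> R) (k : nat) (s : path T) : \bar R :=
  ((T%:R)^-1)%:E *
    (- (\sum_(1 <= i < T + k) eln (marg q (maxn (i.+1 - k) 1) (minn i T) s)))%E.

Definition Rbar_inf (T : nat) (q : path T -> R) (s : path T) : \bar R :=
  ((T%:R)^-1)%:E * (- eln (q s))%E.

End HMMdefs.

(* Main.v *)
Require Import Defs.
From HB Require Import structures.
From mathcomp Require Import all_boot all_order all_algebra.
From mathcomp Require Import all_classical all_reals all_analysis.
From mathcomp Require Import zify ring lra.
Import Order.TTheory GRing.Theory Num.Theory.
Local Open Scope ring_scope.

Section Aux.
Variables (R : realType) (S : finType) (T : nat).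
Local Notation pth := {ffun 'I_T -> S}.

Definition spl (j : 'I_T) (u v : pth) : pth :=
  [ffun t : 'I_T => if (t <= j)%N then u t else v t].

Definition spliceable (q : pth -> R) := forall (j : 'I_T) (u v : pth),
  u j = v j -> q u * q v = q (spl j u v) * q (spl j v u).

Lemma val_ord_pred (t : 'I_T) : (nat_of_ord t != 0)%N -> nat_of_ord (ord_pred t) = (nat_of_ord t).-1.
Proof.
move=> t0 /=. have tT := ltn_ord t. have t1 : (0 < t)%N by rewrite lt0n.
have -> : ((t + T).-1 = (t.-1) + T)%N by lia.
by rewrite modnDr modn_small //; lia.
Qed.

Lemma chain_spliceable (c : R) (H : 'I_T -> S -> S -> R) (q : pth -> R) :
  (forall t x x' y, val t = 0%N -> H t x y = H t x' y) ->
  (forall u, q u = c * \prod_(t < T) H t (u (ord_pred t)) (u t)) -> spliceable q.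
Proof.
move=> H0 qE j u v euv; rewrite !qE.
rewrite mulrACA [in RHS]mulrACA -!big_split /=; congr (_ * _).
apply: eq_bigr => t _; rewrite /spl !ffunE.
case: (eqVneq (val t) 0%N) => [t0|tn0].
  have -> : (t <= j)%N by move: t0 => /= ->.
  by congr (_ * _); apply: H0.
have pv := @val_ord_pred t tn0.
case: (leqP t j) => tj.
  by have -> : (ord_pred t <= j)%N by rewrite pv; lia.
have e1 : forall w1 w2 : pth, w1 j = w2 j ->
    (if (ord_pred t <= j)%N then w1 (ord_pred t) else w2 (ord_pred t)) = w2 (ord_pred t).
  move=> w1 w2 ew; case: ifP => // h.
  have -> : ord_pred t = j.
    apply/val_inj; move: h; rewrite pv -[\val j]/(nat_of_ord j) -[\val (ord_pred t)]/(nat_of_ord (ord_pred t)) pv /=; lia.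
  by [].
by rewrite e1 // (e1 v u) // mulrC.
Qed.

Definition inw (a b : nat) (s u : pth) :=
  [forall t : 'I_T, ((a <= t.+1 <= b)%N) ==> (u t == s t)].

Lemma inw_spl a b c d s (j : 'I_T) (u v : pth) :
  (a <= c)%N -> (c <= b)%N -> (b <= d)%N -> val j = b.-1 -> (0 < b)%N ->
  inw a d s (spl j u v) && inw c b s (spl j v u) = inw a b s u && inw c d s v.
Proof.
move=> ac cb bd jb b0.
apply/andP/andP => -[/forallP H1 /forallP H2]; split; apply/forallP => t;
  apply/implyP => /andP[h1 h2].
- have := H1 t; rewrite /spl ffunE.
  have -> : (t <= j)%N by rewrite jb; lia.
  move/implyP; apply; apply/andP; split; lia.
- case: (leqP t j) => tj.
  + have := H2 t; rewrite /spl ffunE tj.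
    move/implyP; apply; apply/andP; split; rewrite jb in tj; lia.
  + have := H1 t; have tj2 : (t <= j)%N = false by apply/negbTE; rewrite -ltnNge; exact: tj.
    rewrite /spl ffunE tj2.
    move/implyP; apply; apply/andP; split; rewrite jb in tj; lia.
- rewrite /spl ffunE; case: (leqP t j) => tj.
  + have := H1 t; move/implyP; apply; apply/andP; split; rewrite jb in tj; lia.
  + have := H2 t; move/implyP; apply; apply/andP; split; rewrite jb in tj; lia.
- rewrite /spl ffunE.
  have -> : (t <= j)%N by rewrite jb; lia.
  have := H2 t; move/implyP; apply; apply/andP; split; lia.
Qed.


Lemma spl_invol (j : 'I_T) (u v : pth) : spl j (spl j u v) (spl j v u) = u.
Proof. by apply/ffunP => t; rewrite /spl !ffunE; case: (t <= j)%N. Qed.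

Lemma marg_swap (q : pth -> R) a b c d s : spliceable q ->
  (a <= c)%N -> (c <= b)%N -> (b <= d)%N -> (0 < b)%N -> (b <= T)%N ->
  marg q a b s * marg q c d s = marg q a d s * marg q c b s.
Proof.
move=> hq ac cb bd b0 bT.
have jlt : (b.-1 < T)%N by lia.
pose j := Ordinal jlt.
rewrite /marg !mulr_suml.
under eq_bigr do rewrite mulr_sumr.
under [RHS]eq_bigr do rewrite mulr_sumr.
rewrite !(pair_big (fun u : pth => _) (fun u : pth => _) (fun u v => q u * q v)) /=.
pose h := fun p : pth * pth => (spl j p.1 p.2, spl j p.2 p.1).
have hinj : injective h.
  apply: (can_inj (g := h)) => -[u v]; by rewrite /h /= !spl_invol.
rewrite [RHS](reindex_inj hinj).
apply: eq_big => -[u v] /=.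
  by symmetry; exact: (@inw_spl a b c d s j u v ac cb bd (erefl _) b0).
move=> /andP[/forallP H1 /forallP H2].
apply: hq.
have := H1 j; have := H2 j; rewrite /=.
move=> /implyP A1 /implyP A2.
rewrite (eqP (A1 _)) ?(eqP (A2 _)) //; apply/andP; split; lia.
Qed.

Lemma marg_full (q : pth -> R) s : marg q 1 T s = q s.
Proof.
rewrite /marg (big_pred1 s) // => u /=.
apply/forallP/eqP => [h|->].
  apply/ffunP => t; apply/eqP; have /implyP := h t; apply; by rewrite ltn_ord.

by move=> t; apply/implyP.
Qed.


Lemma prod_step (q : pth -> R) s k : spliceable q -> (1 < k)%N -> (1 <= T)%N ->
  forall n, (1 <= n)%N -> (n <= T + k - 1)%N ->
  \prod_(1 <= i < n.+1) marg q (maxn (i.+1 - k) 1) (minn i T) s =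
  marg q 1 (minn n T) s *
  \prod_(1 <= i < n) marg q (maxn (i.+1 - k.-1) 1) (minn i T) s.
Proof.
move=> hq k1 T1; elim=> [//|n IH] n1 nN.
have [n0|npos] := eqVneq n 0%N.
  rewrite n0 big_nat1 big_geq // mulr1.
  by have -> : maxn (1.+1 - k) 1 = 1%N by lia.
rewrite big_nat_recr /=; last by lia.
rewrite IH; [|lia|lia].
rewrite [in RHS]big_nat_recr /=; last by lia.
have -> : maxn (n.+1 - k.-1) 1 = maxn (n.+2 - k) 1 by lia.
have hm := @marg_swap q 1 (minn n T) (maxn (n.+2 - k) 1) (minn n.+1 T) s hq.
rewrite mulrAC hm; [|lia|lia|lia|lia|lia].
by rewrite -!mulrA [X in _ * X]mulrC.
Qed.

Lemma prod_all (q : pth -> R) s k : spliceable q -> (1 < k)%N -> (1 <= T)%N ->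
  \prod_(1 <= i < T + k) marg q (maxn (i.+1 - k) 1) (minn i T) s =
  q s * \prod_(1 <= i < T + k.-1) marg q (maxn (i.+1 - k.-1) 1) (minn i T) s.
Proof.
move=> hq k1 T1.
have e1 : (T + k = (T + k - 1).+1)%N by lia.
have e2 : (T + k.-1 = T + k - 1)%N by lia.
rewrite e1 e2 (@prod_step q s k hq k1 T1 (T + k - 1)); [|lia|lia].
have -> : minn (T + k - 1) T = T by lia.
by rewrite marg_full.
Qed.


Lemma eln_mul (a b : R) : 0 <= a -> 0 <= b -> eln (a * b) = (eln a + eln b)%E.
Proof.
rewrite /eln => a0 b0.
have [->|an] := eqVneq a 0; first by rewrite mul0r eqxx.
have [->|bn] := eqVneq b 0; first by rewrite mulr0 eqxx addeC.
rewrite mulf_eq0 (negbTE an) (negbTE bn) /= lnM //.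
  by rewrite posrE lt_def an.
by rewrite posrE lt_def bn.
Qed.

Lemma eln_prod (I : Type) (r : seq I) (P : pred I) (F : I -> R) :
  (forall i, P i -> 0 <= F i) ->
  (\sum_(i <- r | P i) eln (F i))%E = eln (\prod_(i <- r | P i) F i).
Proof.
move=> F0; elim: r => [|x r IH].
  by rewrite !big_nil /eln oner_eq0 ln1.
rewrite !big_cons; case: ifP => // Px.
rewrite IH eln_mul //; first exact: F0.
by apply: prodr_ge0 => i /F0.
Qed.

Lemma eln_noinf (a : R) : eln a != +oo%E.
Proof. by rewrite /eln; case: ifP. Qed.

Lemma distr_e (c : R) (x y : \bar R) : 0 < c -> x != +oo%E -> y != +oo%E ->
  (c%:E * - (x + y) = c%:E * - x + c%:E * - y)%E.
Proof.
move=> c0; have hc : (c%:E * +oo = +oo)%E by rewrite mulry gtr0_sg // mul1e.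
case: x => [x| |] // _; case: y => [y| |] // _ /=.
- by rewrite -!EFinM -EFinD opprD mulrDr.
- by rewrite !hc.
- by rewrite !hc.
- by rewrite !hc.
Qed.


Lemma main_eq (q : pth -> R) s k : spliceable q -> (forall u, 0 <= q u) ->
  (1 < k)%N -> (1 <= T)%N ->
  Rbar q k s = (Rbar_inf q s + Rbar q k.-1 s)%E.
Proof.
move=> hq q0 k1 T1.
have m0 : forall a b, 0 <= marg q a b s.
  by move=> a b; apply: sumr_ge0 => u _.
rewrite /Rbar /Rbar_inf.
rewrite !eln_prod //.
rewrite prod_all //.
rewrite eln_mul //; last by apply: prodr_ge0 => i _.
rewrite distr_e ?eln_noinf //.
rewrite invr_gt0 ltr0n. by case: (T) T1.
Qed.

End Aux.

Theorem corollary5 (R : realType) (S : finType) (d : measure_display)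
  (X : measurableType d) (mu : {measure set X -> \bar R})
  (pi : S -> R) (P : S -> S -> R) (f : S -> X -> R) (T k : nat) :
  (forall s, 0 <= pi s) -> \sum_(s : S) pi s = 1 ->
  (forall s s', 0 <= P s s') -> (forall s, \sum_(s' : S) P s s' = 1) ->
  (forall s, measurable_fun setT (f s)) -> (forall s x, 0 <= f s x) ->
  (forall s, (\int[mu]_x (f s x)%:E = 1)%E) ->
  (1 <= T)%N -> (1 < k <= T)%N ->
  (forall s : {ffun 'I_T -> S},
      Rbar (prior pi P (T:=T)) k s
      = (Rbar_inf (prior pi P (T:=T)) s + Rbar (prior pi P (T:=T)) k.-1 s)%E)
  /\
  (forall x : 'I_T -> X, 0 < px pi P f x ->
    forall s : {ffun 'I_T -> S},
      Rbar (post pi P f x) k s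
      = (Rbar_inf (post pi P f x) s + Rbar (post pi P f x) k.-1 s)%E).
Proof.
move=> pi0 _ P0 _ _ f0 _ T1 /andP[k1 _].
have prior0 : forall u : {ffun 'I_T -> S}, 0 <= prior pi P u.
  move=> u; apply: prodr_ge0 => t _; case: ifP => _; [exact: pi0|exact: P0].
split.
  move=> s; apply: main_eq => //.
  apply: (@chain_spliceable R S T 1
     (fun t x y => if val t == 0%N then pi y else P x y)).
    by move=> t x x' y /= ->.
  by move=> u; rewrite mul1r.
move=> x px0 s; apply: main_eq => //.
- apply: (@chain_spliceable R S T (px pi P f x)^-1
     (fun t a b => (if val t == 0%N then pi b else P a b) * f b (x t))).
    by move=> t a a' b /= ->.
  by move=> u; rewrite /post /joint /prior -big_split mulrC.
- move=> u; rewrite /post; apply: divr_ge0; last exact: ltW.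
  rewrite /joint; apply: mulr_ge0 => //; apply: prodr_ge0 => t _; exact: f0.
Qed.
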